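(* Let $\pi\in\mathsf{G}_{r,n}$ and $b=\text{B-code}(\pi)$. Then for each $1\le t\le r-1$: (1) $\mathsf{Cyc}^0(\pi)=\mathsf{Max}^0(b)$ and $\mathsf{Cyc}^t(\pi)=\mathsf{Max}^{r-t}(b)$; (2) $\mathsf{Lmic}^0(\pi)=\mathsf{Min}^0(b)$ and $\mathsf{Lmic}^t(\pi)=\mathsf{Min}^{r-t}(b)$; (3) $\mathsf{Lmap}^0(\pi)=\mathsf{Rmil}^0(b)$ and $\mathsf{Lmap}^t(\pi)=\mathsf{Rmil}^{r-t}(b)$; (4) $\mathsf{Lmal}^0(\pi)=\mathsf{Rmip}^0(b)$ and $\mathsf{Lmal}^t(\pi)=\mathsf{Rmip}^{r-t}(b)$.
   Context: $\mathsf{G}_{r,n}=C_r\wr\mathfrak S_n$: words $\pi=\sigma_1^{[z_1]}\cdots\sigma_n^{[z_n]}$, $\sigma\in\mathfrak S_n$, colors $z_i\in\mathbb Z/r$ (represented in $\{0,\dots,r-1\}$). $\pi$ acts on $\Sigma=\{i^{[t]}:i\in[n],t\in\mathbb Z/r\}$ by $\pi(i^{[t]})=\sigma_i^{[z_i+t]}$; $i^{[0]}$ is written $i$. For $1\le i<j$, right multiplication of a word $\tau_1^{[y_1]}\cdots\tau_j^{[y_j]}$ by $(i^{[t]}\,j)$ replaces the letter in position $j$ by $\tau_i^{[y_i+t]}$ and the letter in position $i$ by $\tau_j^{[y_j-t]}$. B-code: $\pi^{(n)}=\pi$; for $j=n,\dots,1$, $c_j$ = position in $\pi^{(j)}$ of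 the letter with base value $j$, $z$ its color, $e_j\equiv -z\pmod r$ in $\{0,\dots,r-1\}$; $\pi^{(j-1)}$ = first $j-1$ letters of $\pi^{(j)}\cdot(c_j^{[e_j]}\,j)$ if $c_j<j$, of $\pi^{(j)}$ if $c_j=j$. $\text{B-code}(\pi)=(c_1^{[e_1]},\dots,c_n^{[e_n]})$. Statistics of $\pi$: $\mathsf{Lmal}(\pi)=\{\sigma_i^{[z_i]}:\sigma_i>\sigma_j\ \forall j<i\}$; $\mathsf{Lmap}(\pi)=\{i^{[z_i]}:\sigma_i>\sigma_j\ \forall j<i\}$; for a word $w_1\cdots w_m$ of colored letters, $\mathsf{Lmil}(w)$ is the set of $w_k$ whose base value is smaller than the base values of all $w_{k'}$, $k'<k$. $\mathsf{Cyc}(\pi)$: for each cycle of $\sigma$ with element set $B$, take $\alpha=\min B$ and $c\equiv\sum_{k\in B}z_k\pmod r$; $\mathsf{Cyc}(\pi)$ is the set of all such $\alpha^{[c]}$. $\mathsf{Lmic}(\pi)=\mathsf{Lmil}(\pi(1)\,\pi^2(1)\cdots\pi^m(1))$ where $m\ge1$ is least with $\pi^m(1)=1$. Statistics of $b=(c_1^{[e_1]},\dots,c_n^{[e_n]})$: $\mathsf{Max}(b)=\{i^{[e_i]}:c_i=i\}$, $\mathsf{Min}(b)=\{i^{[e_i]}:c_i=1\}$, $\mathsf{Rmil}(b)=\{c_i^{[e_i]}:c_i<c_j\ \forall j>i\}$, $\mathsf{Rmip}(b)=\{i^{[e_i]}:c_i<c_j\ \forall j>i\}$. For a set $S$ of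 colored letters, $S^t=\{k:k^{[t]}\in S\}$. *)

(* Defs.v *)
(* Colored permutations of G_{r,n} are represented as words:
   a seq of colored letters (base value, color), positions are 1-based. *)
From mathcomp Require Import all_boot.
Set Implicit Arguments. Unset Strict Implicit. Unset Printing Implicit Defensive.

Definition cletter := (nat * nat)%type.   (* (base value, color) *)

Definition letter (w : seq cletter) (i : nat) : cletter := nth (0, 0) w i.-1.

Definition act (r : nat) (w : seq cletter) (x : cletter) : cletter :=
  ((letter w x.1).1, ((letter w x.1).2 + x.2) %% r).

(* right multiplication of a word by the colored transposition (i^[t] j), i<j *)
Definition mul_transp (r : nat) (w : seq cletter) (i t j : nat) : seq cletter :=
  let li := letter w i in let lj := letter w j in
  set_nth (0, 0) (set_nth (0, 0) w j.-1 (li.1, (li.2 + t) %% r))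
          i.-1 (lj.1, (lj.2 + (r - t %% r)) %% r).

Definition pos (w : seq cletter) (j : nat) : nat := (find (fun x => x.1 == j) w).+1.

(* bcode_rec r w j computes (c_1^[e_1], ..., c_j^[e_j]) from pi^(j) = w *)
Fixpoint bcode_rec (r : nat) (w : seq cletter) (j : nat) : seq cletter :=
  match j with
  | 0 => [::]
  | j'.+1 =>
    let c := pos w j in
    let z := (letter w c).2 in
    let e := (r - z %% r) %% r in
    let w' := take j' (if c < j then mul_transp r w c e j else w) in
    rcons (bcode_rec r w' j') (c, e)
  end.

Definition bcode (r : nat) (w : seq cletter) : seq cletter := bcode_rec r w (size w).

Definition sup (t : nat) (S : seq cletter) : seq nat := [seq x.1 | x <- S & x.2 == t].

Definition Lmal (w : seq cletter) : seq cletter :=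
  [seq letter w i | i <- iota 1 (size w) &
     all (fun j => (letter w j).1 < (letter w i).1) (iota 1 i.-1)].

Definition Lmap (w : seq cletter) : seq cletter :=
  [seq (i, (letter w i).2) | i <- iota 1 (size w) &
     all (fun j => (letter w j).1 < (letter w i).1) (iota 1 i.-1)].

Definition Lmil (u : seq cletter) : seq cletter :=
  [seq nth (0, 0) u k | k <- iota 0 (size u) &
     all (fun k' => (nth (0, 0) u k).1 < (nth (0, 0) u k').1) (iota 0 k)].

Definition sig (w : seq cletter) (i : nat) : nat := (letter w i).1.

Definition cyc_of (w : seq cletter) (i : nat) : seq nat :=
  undup [seq iter k (sig w) i | k <- iota 0 (size w)].

Definition Cyc (r : nat) (w : seq cletter) : seq cletter :=
  [seq (i, sumn [seq (letter w k).2 | k <- cyc_of w i] %% r) |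
     i <- iota 1 (size w) & all (fun k => i <= k) (cyc_of w i)].

(* m = least m >= 1 with pi^m(1) = 1 (= 1^[0]); exists with m <= n*r *)
Definition lmic_len (r : nat) (w : seq cletter) : nat :=
  (find (fun k => iter k.+1 (act r w) (1, 0) == (1, 0)) (iota 0 (size w * r))).+1.

Definition Lmic (r : nat) (w : seq cletter) : seq cletter :=
  Lmil [seq iter k.+1 (act r w) (1, 0) | k <- iota 0 (lmic_len r w)].

Definition Max (b : seq cletter) : seq cletter :=
  [seq (i, (letter b i).2) | i <- iota 1 (size b) & (letter b i).1 == i].

Definition Min (b : seq cletter) : seq cletter :=
  [seq (i, (letter b i).2) | i <- iota 1 (size b) & (letter b i).1 == 1].

Definition rmi (b : seq cletter) (i : nat) : bool :=
  all (fun j => (letter b i).1 < (letter b j).1) (iota i.+1 (size b - i)).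

Definition Rmil (b : seq cletter) : seq cletter :=
  [seq letter b i | i <- iota 1 (size b) & rmi b i].

Definition Rmip (b : seq cletter) : seq cletter :=
  [seq (i, (letter b i).2) | i <- iota 1 (size b) & rmi b i].

(* Main.v *)
Require Import Defs.
From mathcomp Require Import all_boot zify.
Set Implicit Arguments. Unset Strict Implicit. Unset Printing Implicit Defensive.

Lemma period (T : eqType) (g : T -> T) (s : seq T) x :
  {in s, forall y, g y \in s} -> {in s &, injective g} -> x \in s ->
  exists2 p, 0 < p <= size s & iter p g x = x.
Proof.
move=> gs ginj xs.
have its k : iter k g x \in s by elim: k => //= k IH; apply: gs.
set l := [seq iter k g x | k <- iota 0 (size s).+1].
have : ~~ uniq l.
  apply/negP => ul; have := uniq_leq_size ul (s2 := s).
  rewrite /l size_map size_iota ltnn => H; suff : false by []; apply: H.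
  by move=> y /mapP [k _ ->].
case/(uniqPn x) => i [j [ij jl]].
rewrite size_map size_iota in jl.
rewrite !(nth_map 0) ?size_iota //; last by lia.
rewrite !nth_iota; try lia. rewrite !add0n.
move=> e; exists (j - i); first lia.
have ej : j = i + (j - i) by lia.
move: e; rewrite {1}ej iterD.
move: (j - i) => d; clear ij jl ej.
elim: i => [|i IH] //= e; apply: IH.
apply: ginj => //; first by rewrite -iterD its.
Qed.

Lemma iter_mod (T : Type) (g : T -> T) p x k :
  iter p g x = x -> iter k g x = iter (k %% p) g x.
Proof.
move=> hp; rewrite {1}(divn_eq k p) addnC iterD; congr iter.
elim: (k %/ p) => //= q IH. by rewrite mulSn iterD IH hp.
Qed.

Definition Reach (T : Type) (g : T -> T) (P : T -> bool) x y k :=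
  iter k g x = y /\ forall k', k' < k -> P (iter k' g x).

Lemma Reach_S (T : Type) (g : T -> T) P x y k :
  Reach g P x y k.+1 <-> P x /\ Reach g P (g x) y k.
Proof.
rewrite /Reach iterSr; split.
  case=> e H; split; first exact: (H 0).
  by split=> // k' lt; rewrite -iterSr; apply: H.
case=> Px [e H]; split=> // [[|k']] // lt; rewrite iterSr; exact: H.
Qed.

Section Skip.
Variables (T : eqType) (D q P : pred T) (g g' : T -> T).
Hypothesis HD : forall x, D x -> D (g x).
Hypothesis Hq : forall x, D x -> ~~ q x -> q (g x) -> ~~ q (g (g x)).
Hypothesis Hg' : forall x, D x -> ~~ q x -> g' x = if q (g x) then g (g x) else g x.
Hypothesis HP : forall x, q x -> P x.

Lemma skip_inv x : D x -> ~~ q x -> D (g' x) /\ ~~ q (g' x).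
Proof.
move=> Dx qx; rewrite Hg' //; case: ifP => qg; last by split=> //; [exact: HD | rewrite qg].
by split; [apply: HD; apply: HD | exact: Hq].
Qed.

Lemma skip_iter x k : D x -> ~~ q x -> D (iter k g' x) /\ ~~ q (iter k g' x).
Proof. by move=> Dx qx; elim: k => //= k [] ? ?; apply: skip_inv. Qed.

Lemma skip_reach x y : D x -> ~~ q x -> ~~ q y ->
  (exists k, Reach g' P x y k) <-> (exists k, Reach g P x y k).
Proof.
move=> Dx qx qy; split.
  case=> k; elim: k x Dx qx => [|k IH] x Dx qx.
    by case=> /= e _; exists 0; split.
  case/Reach_S => Px R.
  have [Dg' qg'] := skip_inv Dx qx.
  case: (IH _ Dg' qg' R) => K RK.
  move: RK; rewrite Hg' //; case: ifP => qg RK.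
    by exists K.+2; apply/Reach_S; split=> //; apply/Reach_S; split=> //; apply: HP.
  by exists K.+1; apply/Reach_S.
case=> K; elim: K {-2}K (leqnn K) x Dx qx => [|N IH] K lK x Dx qx.
  by case: K lK => // _ [] /= e _; exists 0; split.
case: K lK => [|K] lK.
  by case=> /= e _; exists 0; split.
case/Reach_S => Px R.
case qg : (q (g x)).
  case: K lK R => [|K] lK R.
    by case: R => /= e; rewrite -e qg in qy.
  case/Reach_S: R => _ R.
  have DGG : D (g (g x)) by apply: HD; apply: HD.
  case: (IH K _ _ DGG (Hq Dx qx qg) R) => [|k Rk]; first lia.
  by exists k.+1; apply/Reach_S; split=> //; rewrite Hg' // qg.
have Dg : D (g x) by apply: HD.
case: (IH K _ _ Dg (negbT qg) R) => [|k Rk]; first lia.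
by exists k.+1; apply/Reach_S; split=> //; rewrite Hg' // qg.
Qed.
End Skip.

Definition neg r z := (r - z %% r) %% r.

Record valid (r N : nat) (w : seq cletter) : Prop := Valid {
  vsize : size w = N;
  vrange : forall i, 0 < i <= N -> 0 < sig w i <= N;
  vinj : forall i j, 0 < i <= N -> 0 < j <= N -> sig w i = sig w j -> i = j;
  vsurj : forall v, 0 < v <= N -> exists2 i, 0 < i <= N & sig w i = v;
  vcol : forall i, 0 < i <= N -> (letter w i).2 < r }.

Lemma sig_nth w i : i.-1 < size w -> sig w i = nth 0 (map fst w) i.-1.
Proof. by move=> h; rewrite /sig /letter (nth_map (0,0)). Qed.

Lemma valid_of r n w : perm_eq (map fst w) (iota 1 n) -> all (fun x => x.2 < r) w ->
  valid r n w.
Proof.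
move=> pe ac.
have sz : size w = n by rewrite -(size_map fst) (perm_size pe) size_iota.
have un : uniq (map fst w) by rewrite (perm_uniq pe) iota_uniq.
split=> //.
- move=> i hi; rewrite sig_nth; [|rewrite sz; lia].
  have : nth 0 (map fst w) i.-1 \in iota 1 n.
    by rewrite -(perm_mem pe) mem_nth // size_map sz; lia.
  by rewrite mem_iota add1n ltnS.
- move=> i j hi hj; rewrite !sig_nth; [|rewrite sz; lia|rewrite sz; lia].
  move=> e; suff : i.-1 = j.-1 by lia.
  by apply/eqP; rewrite -(nth_uniq 0 _ _ un) ?size_map ?sz ?e //; lia.
- move=> v hv; have vin : v \in map fst w by rewrite (perm_mem pe) mem_iota; lia.
  exists (index v (map fst w)).+1.
    by move: vin; rewrite -index_mem size_map sz; lia.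
  by rewrite sig_nth /= ?nth_index //; move: vin; rewrite -index_mem size_map.
- move=> i hi; move/allP: ac; apply; rewrite /letter mem_nth // sz; lia.
Qed.

Lemma pos_spec r n w : valid r n.+1 w -> 0 < pos w n.+1 <= n.+1 /\ sig w (pos w n.+1) = n.+1.
Proof.
case=> sz _ _ surj _.
have [i hi si] := surj n.+1 (leqnn _).
have hs : has (fun x : cletter => x.1 == n.+1) w.
  apply/hasP; exists (letter w i); last by rewrite -/(sig w i) si.
  rewrite /letter mem_nth // sz; lia.
move: (hs); rewrite has_find sz => lt; split; first by rewrite /pos; apply/andP; split.
by rewrite /sig /letter /pos /=; apply/eqP; apply: (nth_find (0,0) hs).
Qed.

Definition wstep r w n :=
  let c := pos w n.+1 in
  take n (if c < n.+1 then mul_transp r w c (neg r (letter w c).2) n.+1 else w).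

Lemma size_wstep r w n : size w = n.+1 -> size (wstep r w n) = n.
Proof.
move=> sz; rewrite /wstep size_take; case: ifP => // /negbT.
case: (pos w n.+1 < n.+1); last by rewrite sz; lia.
by rewrite /mul_transp !size_set_nth sz; lia.
Qed.

Lemma bcode_step r w n : size w = n.+1 ->
  bcode r w = rcons (bcode r (wstep r w n)) (pos w n.+1, neg r (letter w (pos w n.+1)).2).
Proof. by move=> sz; rewrite /bcode size_wstep // sz. Qed.

Lemma size_bcode_rec r w j : size (bcode_rec r w j) = j.
Proof. by elim: j w => //= j IH w; rewrite size_rcons IH. Qed.

Lemma size_bcode r w : size (bcode r w) = size w.
Proof. exact: size_bcode_rec. Qed.

Lemma letter_step r n w i : 0 < r -> valid r n.+1 w -> 0 < i <= n ->
  letter (wstep r w n) i =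
  if i == pos w n.+1 then (sig w n.+1, ((letter w n.+1).2 + (letter w (pos w n.+1)).2) %% r)
  else letter w i.
Proof.
move=> r0 V hi; have [hc sc] := pos_spec V.
have sz := vsize V.
rewrite /wstep; move: (pos w n.+1) hc sc => c hc sc.
rewrite /letter nth_take; last lia.
case: ifP => cn.
  rewrite /mul_transp !nth_set_nth /=.
  have -> : (i.-1 == c.-1) = (i == c) by apply/eqP/eqP; lia.
  case: ifP => _; last first.
    by rewrite nth_set_nth /=; have -> : (i.-1 == n) = false by apply/eqP; lia.
  rewrite /sig /letter /=; congr pair.
  have zr : (letter w c).2 < r by apply: (vcol V); lia.
  rewrite /neg; move: zr; rewrite /letter.
  case: (nth (0, 0) w c.-1).2 => [|z] zr.
    by rewrite mod0n subn0 modnn mod0n subn0 modnDr addn0.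
  have h1 : r - z.+1 < r by lia.
  by rewrite (modn_small zr) (modn_small h1) (modn_small h1) subKn //; lia.
have -> : (i == c) = false by apply/eqP; lia.
done.
Qed.

Lemma valid_step r n w : 0 < r -> valid r n.+1 w -> valid r n (wstep r w n).
Proof.
move=> r0 V; have [hc sc] := pos_spec V.
have sz := vsize V.
have sigs i : 0 < i <= n -> sig (wstep r w n) i = if i == pos w n.+1 then sig w n.+1 else sig w i.
  by move=> hi; rewrite /sig letter_step //; case: ifP.
have eqc i : 0 < i <= n.+1 -> (sig w i == n.+1) = (i == pos w n.+1).
  move=> hi; apply/eqP/eqP => [e|->//]; apply: (vinj V) => //; by rewrite e sc.
have rg i : 0 < i <= n.+1 -> 0 < sig w i <= n.+1 by apply: (vrange V).
split.
- exact: size_wstep.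
- move=> i hi; rewrite sigs //; case: ifP => ic.
    have := rg n.+1 (leqnn _); have := eqc n.+1 (leqnn _).
    have : n.+1 != pos w n.+1 by apply/eqP => e; move/eqP: ic; lia.
    move=> /negbTE -> /eqP; lia.
  have := rg i; have := eqc i; rewrite ic => /(_ ltac:(lia)) /eqP; lia.
- move=> i j hi hj; rewrite !sigs //.
  case: ifP => ic; case: ifP => jc; try (move/eqP: ic; move/eqP: jc; lia).
  + move=> e; have := vinj V (i := n.+1) (j := j); rewrite e; move/(_ ltac:(lia) ltac:(lia) erefl); lia.
  + move=> e; have := vinj V (i := i) (j := n.+1); rewrite e; move/(_ ltac:(lia) ltac:(lia) erefl); lia.
  + move=> e; apply: (vinj V) => //; lia.
- move=> v hv; have [i hi si] := vsurj V (v := v) ltac:(lia).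
  case: (ltnP n i) => ni.
    have ein : i = n.+1 by lia.
    have pn : pos w n.+1 != n.+1.
      apply/eqP=> e; move: si; rewrite ein -{1}e sc; lia.
    exists (pos w n.+1); first lia.
    by rewrite sigs ?eqxx -?si ?ein //; lia.
  exists i; first lia.
  rewrite sigs; last lia.
  case: ifP => // /eqP ic.
  by move: si; rewrite ic sc; lia.
- move=> i hi; rewrite letter_step //; case: ifP => _; last by apply: (vcol V); lia.
  by rewrite ltn_mod.
Qed.

Lemma mem_iota1 x n : (x \in iota 1 n) = (0 < x <= n).
Proof. by rewrite mem_iota add1n ltnS. Qed.

Lemma mem_mapf (P : pred nat) (F : nat -> cletter) n y :
  reflect (exists i, [/\ 0 < i <= n, P i & F i = y]) (y \in [seq F i | i <- iota 1 n & P i]).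
Proof.
apply: (iffP mapP) => [[i]|[i [hi Pi <-]]].
  by rewrite mem_filter mem_iota1 => /andP [Pi hi] ->; exists i.
by exists i => //; rewrite mem_filter mem_iota1 Pi.
Qed.

Lemma mem_mapf2 (P : pred nat) (G : nat -> nat) n x z :
  ((x, z) \in [seq (i, G i) | i <- iota 1 n & P i]) = [&& 0 < x <= n, P x & G x == z].
Proof.
apply/mem_mapf/idP => [[i [hi Pi [<- <-]]]|/and3P [hx Px /eqP <-]].
  by rewrite hi Pi eqxx.
by exists x.
Qed.

Lemma mem_sup t S x : (x \in sup t S) = ((x, t) \in S).
Proof.
apply/mapP/idP => [[y]|h]; last by exists (x, t); rewrite // mem_filter eqxx.
by rewrite mem_filter => /andP [/eqP yt yS] ->; move: yt yS; case: y => a b /= ->.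
Qed.

Definition LRm (w : seq cletter) p := all (fun j => (letter w j).1 < (letter w p).1) (iota 1 p.-1).

Definition csum r w i := sumn [seq (letter w k).2 | k <- cyc_of w i] %% r.

Lemma mem_Lmap w p z : ((p, z) \in Lmap w) = [&& 0 < p <= size w, LRm w p & (letter w p).2 == z].
Proof. exact: mem_mapf2. Qed.

Lemma mem_Rmip b p z : ((p, z) \in Rmip b) = [&& 0 < p <= size b, rmi b p & (letter b p).2 == z].
Proof. exact: mem_mapf2. Qed.

Lemma mem_Max b p z : ((p, z) \in Max b) = [&& 0 < p <= size b, (letter b p).1 == p & (letter b p).2 == z].
Proof. exact: mem_mapf2. Qed.

Lemma mem_Min b p z : ((p, z) \in Min b) = [&& 0 < p <= size b, (letter b p).1 == 1 & (letter b p).2 == z].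
Proof. exact: mem_mapf2. Qed.

Lemma mem_Cyc r w p z : ((p, z) \in Cyc r w) =
  [&& 0 < p <= size w, all (fun k => p <= k) (cyc_of w p) & csum r w p == z].
Proof. exact: mem_mapf2. Qed.

Lemma mem_Lmal w y : reflect (exists p, [/\ 0 < p <= size w, LRm w p & letter w p = y]) (y \in Lmal w).
Proof. exact: mem_mapf. Qed.

Lemma mem_Rmil b y : reflect (exists p, [/\ 0 < p <= size b, rmi b p & letter b p = y]) (y \in Rmil b).
Proof. exact: mem_mapf. Qed.

Lemma neg_eq r z : z < r -> neg r z = if z == 0 then 0 else r - z.
Proof.
move=> zr; rewrite /neg (modn_small zr); case: z zr => [|z] zr; first by rewrite subn0 modnn.
by rewrite /= modn_small; lia.
Qed.

Lemma neg_inj r z z' : z < r -> z' < r -> (neg r z == neg r z') = (z == z').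
Proof.
move=> zr z'r; rewrite !neg_eq //.
case: z zr => [|z] zr; case: z' z'r => [|z'] z'r //=; apply/eqP/eqP; lia.
Qed.

Definition Jprop r w := forall p v z, z < r ->
  [&& 0 < p <= size w, LRm w p & letter w p == (v, z)] =
  [&& 0 < v <= size w, rmi (bcode r w) v & letter (bcode r w) v == (p, neg r z)].

Section Step.
Variables (r n : nat) (w : seq cletter).
Hypothesis r0 : 0 < r.
Hypothesis V : valid r n.+1 w.

Definition cc := pos w n.+1.
Definition zc := (letter w cc).2.
Definition w' := wstep r w n.
Definition b' := bcode r w'.

Lemma hcc : 0 < cc <= n.+1. Proof. by case: (pos_spec V). Qed.
Lemma scc : sig w cc = n.+1. Proof. by case: (pos_spec V). Qed.
Lemma szw : size w = n.+1. Proof. exact: vsize V. Qed.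
Lemma szb' : size b' = n. Proof. by rewrite /b' size_bcode size_wstep // szw. Qed.
Lemma bw : bcode r w = rcons b' (cc, neg r zc). Proof. exact: bcode_step szw. Qed.
Lemma V' : valid r n w'. Proof. exact: valid_step. Qed.
Lemma zcr : zc < r. Proof. by apply: (vcol V); apply: hcc. Qed.

Lemma letter_b v : 0 < v <= n -> letter (bcode r w) v = letter b' v.
Proof. by move=> hv; rewrite bw /letter nth_rcons szb'; case: ifP => //; lia. Qed.

Lemma letter_bN : letter (bcode r w) n.+1 = (cc, neg r zc).
Proof. by rewrite bw /letter nth_rcons szb' /= ltnn eqxx. Qed.

Lemma rmi_b v : 0 < v <= n -> rmi (bcode r w) v = rmi b' v && ((letter b' v).1 < cc).
Proof.
move=> hv; rewrite /rmi size_bcode szw szb' letter_b //.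
have -> : n.+1 - v = (n - v) + 1 by lia.
rewrite iotaD all_cat /= andbT.
have -> : v.+1 + (n - v) = n.+1 by lia.
rewrite letter_bN /=; congr andb; apply: eq_in_all => j; rewrite mem_iota => hj.
by rewrite letter_b //; lia.
Qed.

Lemma rmi_bN : rmi (bcode r w) n.+1.
Proof. by rewrite /rmi size_bcode szw subnn. Qed.

Lemma sig_lt j : 0 < j <= n.+1 -> j != cc -> sig w j < n.+1.
Proof.
move=> hj jc; have := vrange V hj; suff : sig w j != n.+1 by lia.
apply/eqP => e; move/eqP: jc; apply; apply: (vinj V) => //; first exact: hcc.
by rewrite e scc.
Qed.

Lemma letter_w' i : 0 < i <= n -> i != cc -> letter w' i = letter w i.
Proof. by move=> hi ic; rewrite /w' letter_step // (negbTE ic). Qed.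

Lemma LRm_lt p : p < cc -> LRm w p = LRm w' p.
Proof.
move=> pc; rewrite /LRm; case: p pc => [|p] pc //=.
apply: eq_in_all => j; rewrite mem_iota => hj.
have hc := hcc.
rewrite !letter_w' //; apply/negP => /eqP; lia.
Qed.

Lemma LRm_c : LRm w cc.
Proof.
apply/allP => j; rewrite mem_iota => hj.
have hc := hcc.
by rewrite -/(sig w j) -/(sig w cc) scc sig_lt //; [lia | apply/eqP; lia].
Qed.

Lemma LRm_gt p : cc < p -> LRm w p = false.
Proof.
move=> cp; apply/negP => /allP /(_ cc).
have hc := hcc.
rewrite mem_iota => /(_ ltac:(lia)); rewrite -/(sig w p) -/(sig w cc) scc.
case: (leqP p n.+1) => pn; first by have := vrange V (i := p) ltac:(lia); lia.
rewrite /sig /letter nth_default // szw; lia.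
Qed.


Lemma letter_wc : letter w cc = (n.+1, zc).
Proof. by rewrite /zc -scc /sig; case: (letter w cc). Qed.

Lemma LHS_char p v z :
  [&& 0 < p <= n.+1, LRm w p & letter w p == (v, z)] =
  (p < cc) && [&& 0 < p <= n, LRm w' p & letter w' p == (v, z)]
  || [&& p == cc, v == n.+1 & z == zc].
Proof.
have hc := hcc.
case: (ltngtP p cc) => pc /=.
- have [p0|pp] := posnP p; first by rewrite p0.
  rewrite LRm_lt // -(letter_w' (i := p)); [|lia|apply/eqP; lia].
  rewrite orbF; congr andb; congr andb; apply/idP/idP; lia.
- by rewrite LRm_gt // andbF.
  rewrite pc LRm_c letter_wc xpair_eqE hc /=.
  by rewrite eq_sym [z == zc]eq_sym.
Qed.

Lemma RHS_char p v z :
  [&& 0 < v <= n.+1, rmi (bcode r w) v & letter (bcode r w) v == (p, z)] =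
  [&& 0 < v <= n, rmi b' v, letter b' v == (p, z) & p < cc]
  || [&& v == n.+1, p == cc & z == neg r zc].
Proof.
case: (ltngtP v n.+1) => vn.
- have [v0|vp] := posnP v; first by rewrite v0.
  rewrite rmi_b ?letter_b; try lia.
  have -> : (v <= n) = true by lia.
  rewrite orbF /=; case: (rmi b' v) => //=.
  by case: eqP => [-> | _] /=; rewrite ?andbT ?andbF.
- have -> : (v <= n) = false by apply/negbTE; rewrite -ltnNge; lia.
  by rewrite !andbF.
- subst v; rewrite rmi_bN letter_bN xpair_eqE /= ltnn /=.
  by rewrite [cc == p]eq_sym [neg r zc == z]eq_sym.
Qed.

Lemma J_step : Jprop r w' -> Jprop r w.
Proof.
move=> IH p v z zr.
rewrite szw LHS_char RHS_char.
have IHp := IH p v z zr; rewrite (vsize V') in IHp.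
rewrite IHp (neg_inj zr zcr).
congr orb; last first.
  by apply/idP/idP => /and3P [-> -> ->].
apply/idP/idP.
  case/andP => pc /and3P [-> -> ->] /=; exact: pc.
by case/and4P => -> -> -> ->.
Qed.
End Step.

Lemma cyc_mem r N w i y : valid r N w -> 0 < i <= N ->
  (y \in cyc_of w i) <-> exists k, iter k (sig w) i = y.
Proof.
move=> V hi; rewrite /cyc_of mem_undup; split.
  by case/mapP => k _ ->; exists k.
case=> k <-.
have [p hp ep] : exists2 p, 0 < p <= size (iota 1 N) & iter p (sig w) i = i.
  apply: period.
  - by move=> x; rewrite !mem_iota1; apply: (vrange V).
  - by move=> x y'; rewrite !mem_iota1; apply: (vinj V).
  - by rewrite mem_iota1.
rewrite (iter_mod k ep); apply/mapP; exists (k %% p) => //.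
rewrite mem_iota (vsize V) add0n; rewrite size_iota in hp.
by have := ltn_pmod k (proj1 (andP hp)); lia.
Qed.

Lemma cyc_range r N w i y : valid r N w -> 0 < i <= N -> y \in cyc_of w i -> 0 < y <= N.
Proof.
move=> V hi /(cyc_mem _ V hi) [k <-]; elim: k => //= k IH; exact: (vrange V).
Qed.

Lemma cyc_uniq w i : uniq (cyc_of w i).
Proof. exact: undup_uniq. Qed.

Section Step2.
Variables (r n : nat) (w : seq cletter).
Hypothesis r0 : 0 < r.
Hypothesis V : valid r n.+1 w.

Lemma eqcc i : 0 < i <= n.+1 -> (sig w i == n.+1) = (i == cc n w).
Proof.
have hc := hcc V; have sc := scc V.
move=> hi; apply/eqP/eqP => [e|->//]; apply: (vinj V) => //; by rewrite e sc.
Qed.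

Lemma sig_w' i : 0 < i <= n ->
  sig (w' r n w) i = if sig w i == n.+1 then sig w n.+1 else sig w i.
Proof.
move=> hi; rewrite eqcc; last lia.
by rewrite /sig /w' letter_step //; case: ifP.
Qed.

Lemma orb_skip i y : 0 < i <= n -> y != n.+1 ->
  (exists k, iter k (sig (w' r n w)) i = y) <-> (exists k, iter k (sig w) i = y).
Proof.
move=> hi yn.
have H := @skip_reach nat (fun x => 0 < x <= n.+1) (fun x => x == n.+1) predT (sig w) (sig (w' r n w)).
have E g x : (exists k, Reach g predT x y k) <-> (exists k, iter k g x = y).
  by split=> [[k [e _]]|[k e]]; exists k.
rewrite -!E; apply: H => //.
- by move=> x hx; apply: (vrange V).
- move=> x hx xn /eqP fx; apply/eqP => ffx.
  have : x = n.+1 by apply: (vinj V) => //; [lia | rewrite fx in ffx; rewrite fx ffx].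
  by move/eqP: xn.
- move=> x hx xn; rewrite sig_w'; [by case: eqP => // ->| move/eqP: xn; lia].
- lia.
- lia.
Qed.

Lemma cyc_mem' i y : 0 < i <= n ->
  (y \in cyc_of (w' r n w) i) = (y != n.+1) && (y \in cyc_of w i).
Proof.
move=> hi; have V1 := V' r0 V.
apply/idP/idP.
  move=> yin; have yr := cyc_range V1 hi yin.
  have yn : y != n.+1 by apply/eqP; lia.
  rewrite yn /=; apply/(cyc_mem _ V) => //; first lia.
  by apply/orb_skip => //; apply/(cyc_mem _ V1).
case/andP => yn yin; apply/(cyc_mem _ V1) => //.
by apply/orb_skip => //; apply/(cyc_mem _ V); first lia.
Qed.

Lemma cyc_closed N w0 i y : valid r N w0 -> 0 < i <= N -> y \in cyc_of w0 i -> sig w0 y \in cyc_of w0 i.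
Proof.
move=> V0 hi /(cyc_mem _ V0 hi) [k <-]; apply/(cyc_mem _ V0 hi); by exists k.+1.
Qed.

Lemma cycmin_step i : 0 < i <= n ->
  all (fun k => i <= k) (cyc_of (w' r n w) i) = all (fun k => i <= k) (cyc_of w i).
Proof.
move=> hi; apply/allP/allP => H y.
  case: (eqVneq y n.+1) => [->|yn] yin; first lia.
  by apply: H; rewrite cyc_mem' // yn.
by rewrite cyc_mem' // => /andP [_]; apply: H.
Qed.

Lemma csum_step i : 0 < i <= n -> csum r (w' r n w) i = csum r w i.
Proof.
move=> hi; have V1 := V' r0 V; have hc := hcc V; have sc := scc V.
have hi' : 0 < i <= n.+1 by lia.
set s := cyc_of w i; set s' := cyc_of (w' r n w) i.
have us : uniq s := cyc_uniq _ _; have us' : uniq s' := cyc_uniq _ _.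
have mem' y : (y \in s') = (y != n.+1) && (y \in s) by apply: cyc_mem'.
have rng y : y \in s -> 0 < y <= n.+1 by apply: (cyc_range V).
have lw y : y \in s -> y != n.+1 -> y != cc n w -> letter (w' r n w) y = letter w y.
  move=> ys yn yc; apply: letter_w' => //; have := rng y ys; move/eqP: yn; lia.
rewrite /csum -/s -/s'.
case: (boolP (n.+1 \in s)) => Ns; last first.
  have ccs : cc n w \notin s.
    by apply/negP => /(cyc_closed V hi') ; rewrite sc (negbTE Ns).
  have pe : perm_eq s' s.
    apply: uniq_perm => // y; rewrite mem'; case: (eqVneq y n.+1) => // ->.
    by rewrite (negbTE Ns).
  rewrite (perm_sumn (perm_map _ pe)); congr (_ %% r); congr sumn.
  apply/eq_in_map => y ys; rewrite lw //; first by apply/eqP => e; move: ys; rewrite e (negbTE Ns).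
  by apply/eqP => e; move: ys; rewrite e (negbTE ccs).
have [ccs ccn] : cc n w \in s /\ cc n w != n.+1.
  move/(cyc_mem _ V hi'): Ns => [k]; elim: k => [|k IH] /= e; first lia.
  have xs : iter k (sig w) i \in s by apply/(cyc_mem _ V hi'); exists k.
  have ex : iter k (sig w) i = cc n w.
    apply/eqP; rewrite -eqcc; [by rewrite e | exact: rng].
  case: (eqVneq (cc n w) n.+1) => cn; last by rewrite -ex xs.
  by have [_ /eqP] := IH (etrans ex cn).
set t := rem (cc n w) (rem n.+1 s).
have p1 : perm_eq s (n.+1 :: cc n w :: t).
  apply: (perm_trans (perm_to_rem Ns)); rewrite perm_cons.
  by apply: perm_to_rem; rewrite (mem_rem_uniq _ us) !inE ccn ccs.
have p2 : perm_eq s' (cc n w :: t).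
  apply: (perm_trans (y := rem n.+1 s)).
    apply: uniq_perm => //; first exact: rem_uniq.
    by move=> y; rewrite mem' (mem_rem_uniq _ us) !inE.
  by apply: perm_to_rem; rewrite (mem_rem_uniq _ us) !inE ccn ccs.
have mt y : y \in t -> [/\ y \in s, y != n.+1 & y != cc n w].
  rewrite (mem_rem_uniq _ (rem_uniq _ us)) !inE (mem_rem_uniq _ us) !inE.
  by case/and3P.
rewrite (perm_sumn (perm_map _ p1)) (perm_sumn (perm_map _ p2)) /=.
rewrite letter_step //; [|lia]; rewrite eqxx /=.
have -> : sumn [seq (letter (w' r n w) k).2 | k <- t] = sumn [seq (letter w k).2 | k <- t].
  by congr sumn; apply/eq_in_map => y /mt [ys yn yc]; rewrite lw.
by rewrite modnDml addnA.
Qed.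

Definition Kprop' w0 := forall i s, 0 < i <= size w0 -> s < r ->
  ((i, s) \in Cyc r w0) = (letter (bcode r w0) i == (i, neg r s)).

Lemma K_step_tmp : True. Proof. done. Qed.
Lemma K_step : Kprop' (w' r n w) -> Kprop' w.
Proof.
move=> IH i s hi sr; have V1 := V' r0 V; have hc := hcc V; have sc := scc V.
rewrite (szw V) in hi.
case: (ltnP i n.+1) => iN.
  have hi' : 0 < i <= n by lia.
  rewrite (letter_b r0 V) // -IH ?(vsize V1) // !mem_Cyc (szw V) (vsize V1) cycmin_step // csum_step //.
  by rewrite hi hi'.
have iN' : i = n.+1 by lia.
subst i; rewrite (letter_bN V) mem_Cyc (szw V) hi /= xpair_eqE.
have hN : 0 < n.+1 <= n.+1 by [].
case: (eqVneq (cc n w) n.+1) => cn /=.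
  have fN : sig w n.+1 = n.+1 by rewrite -{1}cn sc.
  have itN k : iter k (sig w) n.+1 = n.+1 by elim: k => //= k ->.
  have pe : perm_eq (cyc_of w n.+1) [:: n.+1].
    apply: uniq_perm => //; first exact: cyc_uniq.
    move=> y; rewrite inE; apply/idP/eqP.
      by case/(cyc_mem _ V hN) => k <-.
    by move=> ->; apply/(cyc_mem _ V hN); exists 0.
  rewrite (eq_all_r (perm_mem pe)) /= leqnn /=.
  rewrite /csum (perm_sumn (perm_map _ pe)) /= addn0.
  have -> : (letter w n.+1).2 = zc n w by rewrite /zc cn.
  rewrite (modn_small (zcr V)) eq_sym neg_inj //; exact: zcr.
apply/negbTE/negP => /andP [/allP /(_ (sig w n.+1)) H _].
have : sig w n.+1 \in cyc_of w n.+1 by apply/(cyc_mem _ V hN); exists 1.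
move/H => le; have := vrange V hN.
have := eqcc hN; rewrite [n.+1 == _]eq_sym (negbTE cn) => /negbT /eqP; lia.
Qed.
End Step2.

Lemma act_D r N w v : 0 < r -> valid r N w -> 0 < v.1 <= N ->
  0 < (act r w v).1 <= N /\ (act r w v).2 < r.
Proof. by move=> r0 V hv; split; [apply: (vrange V) | rewrite ltn_mod]. Qed.

Lemma iter_act_D r N w v k : 0 < r -> valid r N w -> 0 < v.1 <= N ->
  0 < (iter k (act r w) v).1 <= N.
Proof. by move=> r0 V hv; elim: k => //= k IH; case: (act_D r0 V IH). Qed.

Lemma Lmic_mem r N w y : 0 < r -> valid r N w -> 0 < N ->
  (y \in Lmic r w) <-> exists k, Reach (act r w) (fun v => y.1 < v.1) (act r w (1, 0)) y k.
Proof.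
move=> r0 V N0.
set g := act r w; set a : cletter := (1, 0).
set s := [seq (x, t) | x <- iota 1 N, t <- iota 0 r].
have ms v : (v \in s) = (0 < v.1 <= N) && (v.2 < r).
  case: v => x t /=; apply/allpairsP/idP.
    case=> [[x' t']] [hx ht [-> ->]]; move: hx ht => /=.
    by rewrite mem_iota1 mem_iota => -> /=; lia.
  move/andP => [h1 h2]; exists (x, t); rewrite mem_iota1 mem_iota /=; split => //; lia.
have [p hp ep] : exists2 p, 0 < p <= size s & iter p g a = a.
  apply: period.
  - move=> v; rewrite !ms => /andP [h1 _]; have [] := act_D r0 V h1.
    by move=> -> ->.
  - move=> [x t] [x' t']; rewrite !ms /= => /andP [hx ht] /andP [hx' ht'].
    rewrite /g /act /= => [[e1 e2]].
    have ex : x = x' by apply: (vinj V).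
    subst x'; congr pair; move/eqP: e2; rewrite eqn_modDl !modn_small //.
    by move/eqP.
  - by rewrite ms /=; lia.
rewrite size_allpairs size_iota size_iota in hp.
have hs : has (fun k => iter k.+1 g a == a) (iota 0 (N * r)).
  apply/hasP; exists p.-1; first by rewrite mem_iota; lia.
  by rewrite prednK ?ep //; lia.
set m := lmic_len r w.
have mdef : m = (find (fun k => iter k.+1 g a == a) (iota 0 (N * r))).+1 by rewrite /m /lmic_len (vsize V).
have em : iter m g a = a.
  have := nth_find 0 hs; rewrite nth_iota; last by move: hs; rewrite has_find size_iota.
  by rewrite add0n -mdef => /eqP.
have m0 : 0 < m by rewrite mdef.
have Dit k : 0 < (iter k g a).1 <= N by apply: (iter_act_D _ r0 V); rewrite /=; lia.
rewrite /Lmic -/m -/g -/a; set u := [seq iter k.+1 g a | k <- iota 0 m].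
have su : size u = m by rewrite size_map size_iota.
have nu k : k < m -> nth (0, 0) u k = iter k.+1 g a.
  by move=> km; rewrite (nth_map 0) ?size_iota // nth_iota.
rewrite /Lmil su; split.
  case/mapP => k; rewrite mem_filter mem_iota /= => /andP [/allP H km] ->.
  exists k; rewrite /Reach -iterSr nu //; split=> // k' kk.
  rewrite -iterSr -(nu k'); last lia.
  rewrite -nu //; apply: H; rewrite mem_iota; lia.
case=> k [ek Hk]; rewrite -iterSr in ek.
have km : k < m.
  rewrite ltnNge; apply/negP => mk.
  have := Hk m.-1 ltac:(lia); rewrite -iterSr prednK // em -ek.
  have -> : a.1 = 1 by [].
  by move=> lt; have /andP [h _] := Dit k.+1; move: (leq_trans lt h); rewrite ltnn.
apply/mapP; exists k; last by rewrite nu.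
rewrite mem_filter mem_iota /= km andbT; apply/allP => k'; rewrite mem_iota => hk'.
rewrite !nu; try lia. rewrite ek iterSr; apply: Hk; lia.
Qed.

Definition Mprop r w0 := forall x z, 0 < x <= size w0 -> z < r ->
  ((x, z) \in Lmic r w0) = (letter (bcode r w0) x == (1, neg r z)).

Section Step3.
Variables (r n : nat) (w : seq cletter).
Hypothesis r0 : 0 < r.
Hypothesis V : valid r n.+1 w.

Lemma act_w' v : 0 < v.1 <= n ->
  act r (w' r n w) v = if (act r w v).1 == n.+1 then act r w (act r w v) else act r w v.
Proof.
case: v => x t /= hx.
have E1 : (act r w (x, t)).1 = sig w x by [].
rewrite -/(sig w x) (eqcc V); last lia.
case: eqP => [xc|xc].
  have sx : sig w x = n.+1 by rewrite xc (scc V).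
  rewrite /act /= -/(sig w x) sx /sig letter_step // xc eqxx /=.
  by congr pair; rewrite -/(zc n w) /zc -xc modnDml modnDmr addnA.
by rewrite /act /= /sig letter_step //; case: eqP.
Qed.

Lemma M_step : Mprop r (w' r n w) -> Mprop r w.
Proof.
move=> IH x z hx zr; have V1 := V' r0 V; have hc := hcc V; have sc := scc V.
rewrite (szw V) in hx.
set G := act r w; set a : cletter := (1, 0).
have GD v : 0 < v.1 <= n.+1 -> 0 < (G v).1 <= n.+1 by move=> hv; case: (act_D r0 V hv).
have Ga : G a = (sig w 1, (letter w 1).2).
  rewrite /G /act /= addn0 modn_small //; apply: (vcol V); lia.
case: (ltnP x n.+1) => xn.
  have hx' : 0 < x <= n by lia.
  rewrite (letter_b r0 V) // -IH ?(vsize V1) //.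
  have n0 : 0 < n by lia.
  set P := fun v : cletter => x < v.1.
  have D1 : 0 < a.1 <= n.+1 by rewrite /=; lia.
  have SK := @skip_reach _ (fun v : cletter => 0 < v.1 <= n.+1) (fun v : cletter => v.1 == n.+1) P G (act r (w' r n w)) GD.
  have Hq : forall v : cletter, 0 < v.1 <= n.+1 -> v.1 != n.+1 -> (G v).1 == n.+1 -> (G (G v)).1 != n.+1.
    move=> v hv vn /eqP gv.
    have gv' : sig w v.1 = n.+1 := gv.
    have vc : v.1 = cc n w by apply/eqP; rewrite -(eqcc V) // gv'.
    have -> : (G (G v)).1 = sig w (G v).1 by [].
    rewrite gv; apply/negP; rewrite (eqcc V) ?leqnn // => /eqP cn.
    by move/eqP: vn; apply; rewrite vc cn.
  have Hg' : forall v : cletter, 0 < v.1 <= n.+1 -> v.1 != n.+1 ->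
      act r (w' r n w) v = if (G v).1 == n.+1 then G (G v) else G v.
    move=> v hv vn; apply: act_w'; move/eqP: vn; lia.
  have HP : forall v : cletter, v.1 == n.+1 -> P v by move=> v /eqP e; rewrite /P e; lia.
  have qy : (x, z).1 != n.+1 by rewrite /=; apply/eqP; lia.
  have key : (exists k, Reach G P (G a) (x, z) k) <->
             (exists k, Reach (act r (w' r n w)) P (act r (w' r n w) a) (x, z) k).
    have a1 : a.1 != n.+1 by rewrite /=; apply/eqP; lia.
    rewrite (Hg' a D1 a1).
    case: ifP => qa.
      have DGG : 0 < (G (G a)).1 <= n.+1 := GD _ (GD _ D1).
      rewrite (SK Hq Hg' HP _ _ DGG (Hq a D1 a1 qa) qy).
      split; case => k.
        case: k => [[e _]|k /Reach_S [_ R]]; last by exists k.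
        by move: qy; rewrite -e (eqP qa) eqxx.
      by move=> R; exists k.+1; apply/Reach_S; split=> //; apply: HP.
    by rewrite (SK Hq Hg' HP _ _ (GD _ D1) (negbT qa) qy).
  apply/idP/idP => H.
    apply: (iffRL (Lmic_mem _ r0 V1 n0)); apply: (iffLR key).
    exact: (iffLR (Lmic_mem _ r0 V (ltn0Sn n)) H).
  apply: (iffRL (Lmic_mem _ r0 V (ltn0Sn n))); apply: (iffRL key).
  exact: (iffLR (Lmic_mem _ r0 V1 n0) H).
have ex : x = n.+1 by lia.
subst x.
rewrite (letter_bN V) xpair_eqE.
have E : (n.+1, z) \in Lmic r w <-> G a = (n.+1, z).
  rewrite (Lmic_mem _ r0 V) //; split.
    case=> [[|k]]; first by case.
    have D1 : 0 < a.1 <= n.+1 by rewrite /=; lia.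
    have h : (G a).1 <= n.+1 := proj2 (andP (GD a D1)).
    by case/Reach_S => lt _; move: (leq_trans lt h); rewrite ltnn.
  by move=> e; exists 0; split.
apply/idP/idP.
  move/E; rewrite Ga => [[e1 e2]].
  have c1 : 1 = cc n w by apply/eqP; rewrite -(eqcc V) ?e1 //; lia.
  by rewrite -c1 eqxx /= neg_inj ?zcr // /zc -c1 e2.
case/andP => /eqP c1; rewrite neg_inj ?zcr // => /eqP ez.
apply/E; rewrite Ga -ez /zc c1; congr pair.
by rewrite -{1}c1 sc.
Qed.
End Step3.

Lemma all_props r N w : 0 < r -> valid r N w -> [/\ Jprop r w, Kprop' r w & Mprop r w].
Proof.
move=> r0; elim: N w => [|N IH] w V.
  have w0 : w = [::] by apply/size0nil; apply: (vsize V).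
  subst w; split.
  - by move=> p v z zr /=; rewrite [p <= 0]leqn0 [v <= 0]leqn0; case: p; case: v.
  - by move=> i s /=; lia.
  - by move=> x z /=; lia.
case: (IH _ (V' r0 V)) => J1 K1 M1.
split; [exact: J_step J1 | exact: K_step K1 | exact: M_step M1].
Qed.

Lemma pair_eqE (u : cletter) a b : (u == (a, b)) = (u.1 == a) && (u.2 == b).
Proof. by case: u. Qed.

Section Final.
Variables (r n : nat) (w : seq cletter).
Hypothesis r0 : 0 < r.
Hypothesis n0 : 0 < n.
Hypothesis V : valid r n w.

Local Notation b := (bcode r w).
Lemma szb : size b = n. Proof. by rewrite size_bcode (vsize V). Qed.

Lemma stat_Cyc x t : t < r -> ((x, t) \in Cyc r w) = ((x, neg r t) \in Max b).
Proof.
move=> tr; have [_ K _] := all_props r0 V.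
rewrite mem_Max szb.
case: (boolP (0 < x <= n)) => hx /=.
  by rewrite K ?(vsize V) // pair_eqE.
by rewrite mem_Cyc (vsize V) (negbTE hx).
Qed.

Lemma stat_Lmic x t : t < r -> ((x, t) \in Lmic r w) = ((x, neg r t) \in Min b).
Proof.
move=> tr; have [_ _ M] := all_props r0 V.
rewrite mem_Min szb.
case: (boolP (0 < x <= n)) => hx /=.
  by rewrite M ?(vsize V) // pair_eqE.
apply/negbTE/negP => /(Lmic_mem _ r0 V n0) [k [e _]].
move/negP: hx; apply; rewrite -[x]/((x, t).1) -e.
by apply: (iter_act_D _ r0 V); apply: (proj1 (act_D r0 V _)); rewrite /=; lia.
Qed.

Lemma stat_Lmap x t : t < r -> ((x, t) \in Lmap w) = ((x, neg r t) \in Rmil b).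
Proof.
move=> tr; have [J _ _] := all_props r0 V.
rewrite mem_Lmap (vsize V); apply/idP/mem_Rmil.
  case/and3P => hx lr et; exists (letter w x).1.
  have := J x (letter w x).1 t tr; rewrite (vsize V) hx lr pair_eqE eqxx et /=.
  by move/esym/and3P => [hv rv /eqP e]; split=> //; rewrite szb.
case=> v [hv rv e]; have := J x v t tr; rewrite (vsize V) -szb hv rv e eqxx /=.
move=> H; case/and3P: H => h1 h2 /eqP h3; by rewrite h1 h2 h3 eqxx.
Qed.

Lemma stat_Lmal v t : t < r -> ((v, t) \in Lmal w) = ((v, neg r t) \in Rmip b).
Proof.
move=> tr; have [J _ _] := all_props r0 V.
rewrite mem_Rmip szb; apply/mem_Lmal/idP.
  case=> p [hp lr e]; rewrite (vsize V) in hp.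
  have H := J p v t tr; rewrite (vsize V) hp lr e eqxx /= in H.
  case/and3P: (esym H) => hv rv; rewrite pair_eqE => /andP [_ e2].
  by rewrite hv rv e2.
case/and3P => hv rv e2; exists (letter b v).1.
have H := J (letter b v).1 v t tr; rewrite (vsize V) hv rv [letter b v == _]pair_eqE eqxx e2 /= in H.
by case/and3P: H => hp lr /eqP e; rewrite (vsize V).
Qed.

End Final.

Theorem lemma3p4 (r n : nat) (w : seq (nat * nat)) :
  0 < r -> 0 < n ->
  perm_eq (map fst w) (iota 1 n) ->
  all (fun x => x.2 < r) w ->
  let b := bcode r w in
  [/\ sup 0 (Cyc r w) =i sup 0 (Max b)
      /\ (forall t, 1 <= t <= r - 1 -> sup t (Cyc r w) =i sup (r - t) (Max b)),
      sup 0 (Lmic r w) =i sup 0 (Min b)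
      /\ (forall t, 1 <= t <= r - 1 -> sup t (Lmic r w) =i sup (r - t) (Min b)),
      sup 0 (Lmap w) =i sup 0 (Rmil b)
      /\ (forall t, 1 <= t <= r - 1 -> sup t (Lmap w) =i sup (r - t) (Rmil b))
    & sup 0 (Lmal w) =i sup 0 (Rmip b)
      /\ (forall t, 1 <= t <= r - 1 -> sup t (Lmal w) =i sup (r - t) (Rmip b))].
Proof.
move=> r0 n0 pe ac b.
have V := valid_of pe ac.
have sup_eq (A B : seq cletter) :
    (forall x t, t < r -> ((x, t) \in A) = ((x, neg r t) \in B)) ->
    (sup 0 A =i sup 0 B) /\ (forall t, 1 <= t <= r - 1 -> sup t A =i sup (r - t) B).
  move=> H; split.
    by move=> x; rewrite !mem_sup H // neg_eq.
  move=> t ht x; rewrite !mem_sup H; last lia.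
  rewrite neg_eq; last lia.
  by case: t ht => [|t] ht.
split; apply: sup_eq => x t tr.
- exact: (stat_Cyc r0 V).
- exact: (stat_Lmic r0 n0 V).
- exact: (stat_Lmap r0 V).
- exact: (stat_Lmal r0 V).
Qed.
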